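(* Let $P=(I,J,K)$ be a reduced presentation and let $a\in I$. Then $\mathbf{\L}_a$ is embeddable in $\mathbf B_\Delta$.
   Context: Wajsberg hoops: basic hoops satisfying $(x\to y)\to y\approx(y\to x)\to x$. $\Gamma(\mathbf G,u)$ is the Wajsberg hoop on $[0,u]$ with $ab=\max\{a+b-u,0\}$, $a\to b=\min\{u-a+b,u\}$; $\mathbf{\L}_n=\Gamma(\mathbb Z,n)$ (elements $0,\dots,n$), $\mathbf{\L}_{n,k}=\Gamma(\mathbb Z\times_l\mathbb Z,(n,k))$ (lexicographic order), $\mathbf{\L}_n^\infty=\mathbf{\L}_{n,0}$, $\mathbf C_\omega$ the negative cone of $\mathbb Z$, i.e. the free monoid on one generator $c$ with $c^l\to c^m=c^{\max(l-m,0)}$. In a bounded Wajsberg hoop, $\neg a=a\to0$. $X{\downarrow}$ = set of divisors of elements of $X$. A presentation $P=(I,J,K)$ ($I,J$ finite subsets of $\mathbb N\setminus\{0\}$, $K\subseteq\{\omega\}$) is reduced if $I\cup J\cup K\ne\emptyset$, $J\ne\emptyset\Rightarrow K=\emptyset$, no $m\in I$ divides any element of $(I\setminus\{m\})\cup J$, and no $n\in J$ divides any element of $J\setminus\{n\}$. Generators: for $k\ge2$, $0\le h<k$, $\gcd(k,h)=1$, $g_{k,h}$ is the unique element $a\in\mathbf{\L}_{k,h}$ with $a\le\neg a$ generating $\mathbf{\L}_{k,h}$; $g_{1,0}=(0,1)\in\mathbf{\L}_{1,0}$. Construction: $\Delta_I=\{(k,h,2):0\le h<k\in I{\downarrow},\gcd(k,h)=1\}$,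 $\Delta_J=\{(k,h,i):i\in\{0,1\},0\le h<k\in J{\downarrow},\gcd(k,h)=1\}$, $\Delta_K=\{(0,0,3)\}$ if $K=\{\omega\}$, else $\emptyset$; $\Delta=\Delta_I\cup\Delta_J\cup\Delta_K$; $\mathbf A^0_{k,h}=\mathbf A^1_{k,h}=\mathbf{\L}_{k,h}$, $\mathbf A^2_{k,h}=\mathbf{\L}_k$, $\mathbf A^3_{k,h}=\mathbf C_\omega$; $\mathbf A_\Delta=\prod_{(k,h,i)\in\Delta}\mathbf A^i_{k,h}$; $\bar g(k,h,0)=g_{k,h}$, $\bar g(k,h,1)=\neg g_{k,h}$, $\bar g(k,h,2)=h\in\mathbf{\L}_k$, $\bar g(0,0,3)=c$; $\mathbf B_\Delta$ is the subalgebra of $\mathbf A_\Delta$ generated by $\bar g$. *)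

(* Defs.v *)
From Stdlib Require Import ZArith List Arith ClassicalEpsilon.
Import ListNotations.
Open Scope Z_scope.

Definition lexleb (p q : Z * Z) : bool :=
  (fst p <? fst q) || ((fst p =? fst q) && (snd p <=? snd q)).
Definition lexle (p q : Z * Z) : Prop := lexleb p q = true.
Definition lmax (p q : Z * Z) : Z * Z := if lexleb p q then q else p.
Definition lmin (p q : Z * Z) : Z * Z := if lexleb p q then p else q.
Definition padd (p q : Z * Z) : Z * Z := (fst p + fst q, snd p + snd q).
Definition psub (p q : Z * Z) : Z * Z := (fst p - fst q, snd p - snd q).

(** * L_{k,h} = Gamma(Z x_l Z, (k,h)) : universe [(0,0),(k,h)] (lex order) *)
Definition uL (k h : nat) : Z * Z := (Z.of_nat k, Z.of_nat h).
Definition memL (k h : nat) (a : Z * Z) : Prop :=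
  lexle (0, 0) a /\ lexle a (uL k h).
Definition mulL (k h : nat) (a b : Z * Z) : Z * Z :=
  lmax (psub (padd a b) (uL k h)) (0, 0).
Definition impL (k h : nat) (a b : Z * Z) : Z * Z :=
  lmin (padd (psub (uL k h) a) b) (uL k h).
Definition negL (k h : nat) (a : Z * Z) : Z * Z := impL k h a (0, 0).

Inductive genL (k h : nat) (a : Z * Z) : Z * Z -> Prop :=
| genL_gen : genL k h a a
| genL_one : genL k h a (uL k h)
| genL_mul x y : genL k h a x -> genL k h a y -> genL k h a (mulL k h x y)
| genL_imp x y : genL k h a x -> genL k h a y -> genL k h a (impL k h x y).

Definition is_gen (k h : nat) (a : Z * Z) : Prop :=
  memL k h a /\ lexle a (negL k h a) /\
  (forall b, memL k h b -> genL k h a b).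

(** g_{k,h}: for k >= 2 the (unique) element with the property above
    (chosen by definite description); g_{1,0} = (0,1). *)
Definition g (k h : nat) : Z * Z :=
  if Nat.eqb k 1 then (0, 1)
  else epsilon (inhabits (0, 0)) (is_gen k h).

(** * L_n = Gamma(Z, n), elements 0..n *)
Definition memLn (n : nat) (x : Z) : Prop := 0 <= x <= Z.of_nat n.
Definition mulLn (n : nat) (x y : Z) : Z := Z.max (x + y - Z.of_nat n) 0.
Definition impLn (n : nat) (x y : Z) : Z := Z.min (Z.of_nat n - x + y) (Z.of_nat n).

(** Components are encoded in Z x Z:
    - i = 0,1 : L_{k,h}, elements are pairs as above;
    - i = 2   : L_k, element x in 0..k encoded as (x,0);
    - i = 3   : C_omega = negative cone of Z (product = +, 1 = 0,
                x -> y = min(y-x,0)), element x <= 0 encoded as (x,0);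
                the generator c is -1. *)
Definition idx : Type := (nat * nat * nat)%type.
Definition elt : Type := idx -> Z * Z.

Definition cmul (t : idx) (a b : Z * Z) : Z * Z :=
  match t with
  | (k, h, 0%nat) | (k, h, 1%nat) => mulL k h a b
  | (k, _, 2%nat) => (mulLn k (fst a) (fst b), 0)
  | _ => (fst a + fst b, 0)
  end.
Definition cimp (t : idx) (a b : Z * Z) : Z * Z :=
  match t with
  | (k, h, 0%nat) | (k, h, 1%nat) => impL k h a b
  | (k, _, 2%nat) => (impLn k (fst a) (fst b), 0)
  | _ => (Z.min (fst b - fst a) 0, 0)
  end.
Definition cone (t : idx) : Z * Z :=
  match t with
  | (k, h, 0%nat) | (k, h, 1%nat) => uL k h
  | (k, _, 2%nat) => (Z.of_nat k, 0)
  | _ => (0, 0)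
  end.

Definition mulA (f g : elt) : elt := fun t => cmul t (f t) (g t).
Definition impA (f g : elt) : elt := fun t => cimp t (f t) (g t).
Definition oneA : elt := cone.

Definition gbar : elt := fun t =>
  match t with
  | (k, h, 0%nat) => g k h
  | (k, h, 1%nat) => negL k h (g k h)
  | (_, h, 2%nat) => (Z.of_nat h, 0)
  | _ => (-1, 0)
  end.

(** B_Delta: the subalgebra generated by gbar (operations are pointwise,
    so generation can be done on all indices and then restricted to Delta). *)
Inductive genB : elt -> Prop :=
| genB_gen : genB gbar
| genB_one : genB oneA
| genB_mul f f' : genB f -> genB f' -> genB (mulA f f')
| genB_imp f f' : genB f -> genB f' -> genB (impA f f').

Definition downset (X : list nat) (k : nat) : Prop :=
  exists m, In m X /\ Nat.divide k m.

(* I, J finite subsets of N \ {0}; K subset of {omega} encoded as a bool *)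
Definition reduced (I J : list nat) (K : bool) : Prop :=
  (forall m, In m I -> (0 < m)%nat) /\ (forall n, In n J -> (0 < n)%nat) /\
  (I <> [] \/ J <> [] \/ K = true) /\
  (J <> [] -> K = false) /\
  (forall m, In m I -> forall x, ((In x I /\ x <> m) \/ In x J) ->
      ~ Nat.divide m x) /\
  (forall n, In n J -> forall x, In x J -> x <> n -> ~ Nat.divide n x).

Definition Delta (I J : list nat) (K : bool) (t : idx) : Prop :=
  match t with
  | (k, h, i) =>
      ((i = 2%nat /\ (h < k)%nat /\ downset I k /\ Nat.gcd k h = 1%nat) \/
       ((i = 0%nat \/ i = 1%nat) /\ (h < k)%nat /\ downset J k
            /\ Nat.gcd k h = 1%nat) \/
       (K = true /\ k = 0%nat /\ h = 0%nat /\ i = 3%nat))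
  end.

(* equality of elements of A_Delta (functions restricted to Delta) *)
Definition eqD (I J : list nat) (K : bool) (f f' : elt) : Prop :=
  forall t, Delta I J K t -> f t = f' t.

Definition embeds_in_B (n : nat) (I J : list nat) (K : bool) : Prop :=
  exists phi : Z -> elt,
    (forall x, memLn n x -> genB (phi x)) /\
    (forall x y, memLn n x -> memLn n y ->
        eqD I J K (phi (mulLn n x y)) (mulA (phi x) (phi y))) /\
    (forall x y, memLn n x -> memLn n y ->
        eqD I J K (phi (impLn n x y)) (impA (phi x) (phi y))) /\
    eqD I J K (phi (Z.of_nat n)) oneA /\
    (forall x y, memLn n x -> memLn n y -> eqD I J K (phi x) (phi y) -> x = y).

(* Main.v *)
Require Import Defs.
From Stdlib Require Import ZArith List Arith.
From Stdlib Require Import Lia ClassicalEpsilon Bool.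
Import ListNotations.
Open Scope Z_scope.

Inductive tm := TV | TOne | TMul (x y : tm) | TImp (x y : tm).

Fixpoint evalE (w : elt) (t : tm) : elt :=
  match t with
  | TV => w | TOne => oneA
  | TMul x y => mulA (evalE w x) (evalE w y)
  | TImp x y => impA (evalE w x) (evalE w y)
  end.

Fixpoint evalZ (m v : Z) (t : tm) : Z :=
  match t with
  | TV => v | TOne => m
  | TMul x y => Z.max (evalZ m v x + evalZ m v y - m) 0
  | TImp x y => Z.min (m - evalZ m v x + evalZ m v y) m
  end.

Fixpoint evalC (s : Z) (t : tm) : Z :=
  match t with
  | TV => s | TOne => 0
  | TMul x y => evalC s x + evalC s y
  | TImp x y => Z.min (evalC s y - evalC s x) 0
  end.

Lemma fst_lmax p q : fst (lmax p q) = Z.max (fst p) (fst q).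
Proof.
  destruct p as [p1 p2], q as [q1 q2]; unfold lmax, lexleb; simpl.
  destruct (Z.ltb_spec p1 q1); destruct (Z.eqb_spec p1 q1); destruct (Z.leb_spec p2 q2);
  simpl; lia.
Qed.

Lemma fst_lmin p q : fst (lmin p q) = Z.min (fst p) (fst q).
Proof.
  destruct p as [p1 p2], q as [q1 q2]; unfold lmin, lexleb; simpl.
  destruct (Z.ltb_spec p1 q1); destruct (Z.eqb_spec p1 q1); destruct (Z.leb_spec p2 q2);
  simpl; lia.
Qed.

Lemma fst_eval w t k h i : (i <= 2)%nat ->
  fst (evalE w t (k,h,i)) = evalZ (Z.of_nat k) (fst (w (k,h,i))) t.
Proof.
  intros Hi. induction t; simpl.
  - reflexivity.
  - unfold oneA, cone. destruct i as [|[|[|i]]]; simpl; try reflexivity; lia.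
  - unfold mulA. destruct i as [|[|[|i]]]; try lia; simpl; unfold mulL, mulLn;
    rewrite ?fst_lmax; simpl; rewrite <- IHt1, <- IHt2; unfold mulA; simpl; try lia; reflexivity.
  - unfold impA. destruct i as [|[|[|i]]]; try lia; simpl; unfold impL, impLn;
    rewrite ?fst_lmin; simpl; rewrite <- IHt1, <- IHt2; unfold impA; simpl; try lia; reflexivity.
Qed.

Lemma snd_eval2 w t k h : snd (w (k,h,2%nat)) = 0 -> snd (evalE w t (k,h,2%nat)) = 0.
Proof. intros H. induction t; simpl; auto. Qed.

Lemma eval2 w t k h : snd (w (k,h,2%nat)) = 0 ->
  evalE w t (k,h,2%nat) = (evalZ (Z.of_nat k) (fst (w (k,h,2%nat))) t, 0).
Proof.
  intros H. rewrite (surjective_pairing (evalE w t (k,h,2%nat))).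
  rewrite fst_eval by lia. rewrite snd_eval2 by auto. reflexivity.
Qed.

Lemma lmax_gt p q : fst q < fst p -> lmax p q = p.
Proof.
  destruct p as [p1 p2], q as [q1 q2]; unfold lmax, lexleb; simpl; intros.
  destruct (Z.ltb_spec p1 q1); destruct (Z.eqb_spec p1 q1); simpl; auto; lia.
Qed.
Lemma lmax_lt p q : fst p < fst q -> lmax p q = q.
Proof.
  destruct p as [p1 p2], q as [q1 q2]; unfold lmax, lexleb; simpl; intros.
  destruct (Z.ltb_spec p1 q1); simpl; auto; lia.
Qed.
Lemma lmin_gt p q : fst q < fst p -> lmin p q = q.
Proof.
  destruct p as [p1 p2], q as [q1 q2]; unfold lmin, lexleb; simpl; intros.
  destruct (Z.ltb_spec p1 q1); destruct (Z.eqb_spec p1 q1); simpl; auto; lia.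
Qed.
Lemma lmin_lt p q : fst p < fst q -> lmin p q = p.
Proof.
  destruct p as [p1 p2], q as [q1 q2]; unfold lmin, lexleb; simpl; intros.
  destruct (Z.ltb_spec p1 q1); simpl; auto; lia.
Qed.
Lemma lmin_eq x r s : lmin (x, r) (x, s) = (x, Z.min r s).
Proof.
  unfold lmin, lexleb; simpl. rewrite Z.ltb_irrefl, Z.eqb_refl; simpl.
  destruct (Z.leb_spec r s); f_equal; lia.
Qed.

Lemma evalJ w t k h i s : (i <= 1)%nat -> (1 <= k)%nat ->
  w (k,h,i) = (Z.of_nat k, s) ->
  evalE w t (k,h,i) = (Z.of_nat k, Z.of_nat h + evalC (s - Z.of_nat h) t).
Proof.
  intros Hi Hk Hw. induction t; simpl.
  - rewrite Hw. f_equal. lia.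
  - unfold oneA, cone. destruct i as [|[|i]]; try lia; unfold uL; f_equal; lia.
  - unfold mulA. destruct i as [|[|i]]; try lia; simpl; unfold mulL;
    rewrite IHt1, IHt2; unfold padd, psub, uL; simpl; rewrite lmax_gt; simpl; try lia;
    f_equal; lia.
  - unfold impA. destruct i as [|[|i]]; try lia; simpl; unfold impL;
    rewrite IHt1, IHt2; unfold padd, psub, uL; simpl;
    (replace (Z.of_nat k - Z.of_nat k + Z.of_nat k) with (Z.of_nat k) by lia);
    rewrite lmin_eq; f_equal; lia.
Qed.

Lemma eval3 w t s : w (0%nat,0%nat,3%nat) = (s,0) ->
  evalE w t (0%nat,0%nat,3%nat) = (evalC s t, 0).
Proof.
  intros Hw. induction t; simpl; auto.
  - unfold mulA; simpl. rewrite IHt1, IHt2. reflexivity.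
  - unfold impA; simpl. rewrite IHt1, IHt2. reflexivity.
Qed.

Fixpoint pw (t : tm) (n : nat) : tm :=
  match n with O => TOne | S n => TMul (pw t n) t end.
Definition Zt N := pw TV N.
Definition negT N t := TImp t (Zt N).
Definition oplusT N x y := TImp (negT N x) y.
Fixpoint Lt N (A : nat) (B : Z) : tm :=
  match A with
  | O => if Z.leb 0 B then Zt N else TOne
  | S A => TMul (oplusT N (Lt N A B) TV) (Lt N A (B - 1))
  end.
Definition sharp N t := TImp (TImp t (Zt N)) t.

Lemma evalZ_range m v t : 0 <= v <= m -> 0 <= evalZ m v t <= m.
Proof. intros H; induction t; simpl; lia. Qed.

Lemma evalZ_pw m v t n : 0 <= evalZ m v t <= m ->
  evalZ m v (pw t n) = Z.max (m - Z.of_nat n * (m - evalZ m v t)) 0.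
Proof.
  intros H. induction n; simpl pw; simpl evalZ.
  - lia.
  - rewrite IHn. set (c := evalZ m v t) in *.
    replace (Z.of_nat (S n) * (m - c)) with (Z.of_nat n * (m - c) + (m - c)) by lia.
    assert (0 <= Z.of_nat n * (m - c)) by nia. lia.
Qed.

Lemma evalZ_Zt m v N : 0 <= v < m -> m <= Z.of_nat N -> evalZ m v (Zt N) = 0.
Proof.
  intros H1 H2. unfold Zt. rewrite evalZ_pw by (simpl; lia). simpl. nia.
Qed.

Lemma clamp_step m v t : 0 <= v <= m ->
  Z.max (Z.min (m - (Z.min (m - Z.max 0 (Z.min t m) + 0) m) + v) m
         + Z.max 0 (Z.min (t + m) m) - m) 0
  = Z.max 0 (Z.min (t + v) m).
Proof. intros; lia. Qed.

Lemma evalZ_Lt m v N A B : 0 <= v < m -> m <= Z.of_nat N ->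
  evalZ m v (Lt N A B) = Z.max 0 (Z.min (Z.of_nat A * v - B * m) m).
Proof.
  intros Hv HN. revert B. induction A; intros B; simpl Lt.
  - destruct (Z.leb_spec 0 B).
    + rewrite evalZ_Zt by lia. nia.
    + simpl. nia.
  - simpl evalZ. unfold negT. simpl evalZ. rewrite evalZ_Zt by lia.
    rewrite !IHA.
    replace (Z.of_nat A * v - (B - 1) * m) with ((Z.of_nat A * v - B * m) + m) by ring.
    replace (Z.of_nat (S A) * v - B * m) with ((Z.of_nat A * v - B * m) + v) by lia.
    apply clamp_step. lia.
Qed.

Lemma evalZ_sharp0 m v N t : 0 <= v < m -> m <= Z.of_nat N -> evalZ m v t = 0 ->
  evalZ m v (sharp N t) = 0.
Proof. intros. unfold sharp; simpl. rewrite evalZ_Zt by lia. rewrite H1. lia. Qed.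

Lemma evalZ_sharp1 m v N t : 0 <= v < m -> m <= Z.of_nat N -> evalZ m v t = m ->
  evalZ m v (sharp N t) = m.
Proof. intros. unfold sharp; simpl. rewrite evalZ_Zt by lia. rewrite H1. lia. Qed.

Definition fkp N (a h k p : nat) : tm :=
  if (k * h <? a * p)%nat then Lt N (a * k) (Z.of_nat (k * h))
  else negT N (Lt N (a * k) (Z.of_nat (k * h) - 1)).

Lemma fkp_at_a N a h k p : (h < a)%nat -> (a <= N)%nat -> (1 <= k)%nat ->
  (a * p <> k * h)%nat ->
  evalZ (Z.of_nat a) (Z.of_nat h) (fkp N a h k p) = 0.
Proof.
  intros. unfold fkp. destruct (Nat.ltb_spec (k*h) (a*p)).
  - rewrite evalZ_Lt by lia. rewrite !Nat2Z.inj_mul.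
    replace (Z.of_nat a * Z.of_nat k * Z.of_nat h - Z.of_nat k * Z.of_nat h * Z.of_nat a) with 0 by ring.
    lia.
  - unfold negT; simpl. rewrite evalZ_Zt by lia. rewrite evalZ_Lt by lia. rewrite !Nat2Z.inj_mul.
    replace (Z.of_nat a * Z.of_nat k * Z.of_nat h - (Z.of_nat k * Z.of_nat h - 1) * Z.of_nat a)
      with (Z.of_nat a) by ring.
    lia.
Qed.

Lemma fkp_at_k N a h k p : (p < k)%nat -> (k <= N)%nat -> (1 <= a)%nat ->
  (a * p <> k * h)%nat ->
  evalZ (Z.of_nat k) (Z.of_nat p) (fkp N a h k p) = Z.of_nat k.
Proof.
  intros. unfold fkp. destruct (Nat.ltb_spec (k*h) (a*p)).
  - rewrite evalZ_Lt by lia. rewrite !Nat2Z.inj_mul.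
    replace (Z.of_nat a * Z.of_nat k * Z.of_nat p - Z.of_nat k * Z.of_nat h * Z.of_nat k)
      with (Z.of_nat k * (Z.of_nat a * Z.of_nat p - Z.of_nat k * Z.of_nat h)) by ring.
    assert (Z.of_nat a * Z.of_nat p - Z.of_nat k * Z.of_nat h >= 1) by nia.
    nia.
  - unfold negT; simpl. rewrite evalZ_Zt by lia. rewrite evalZ_Lt by lia. rewrite !Nat2Z.inj_mul.
    replace (Z.of_nat a * Z.of_nat k * Z.of_nat p - (Z.of_nat k * Z.of_nat h - 1) * Z.of_nat k)
      with (Z.of_nat k * (Z.of_nat a * Z.of_nat p - Z.of_nat k * Z.of_nat h + 1)) by ring.
    assert (Z.of_nat a * Z.of_nat p - Z.of_nat k * Z.of_nat h + 1 <= 0) by (assert (a*p < k*h)%nat by lia; nia).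
    nia.
Qed.

Definition killT N := pw (TImp (TImp (Zt N) (TMul (Zt N) TV)) TV) N.

Lemma evalC_pw s t n : evalC s (pw t n) = Z.of_nat n * evalC s t.
Proof. induction n; simpl pw; simpl evalC; [lia|]. rewrite IHn. rewrite Nat2Z.inj_succ. ring. Qed.

Lemma killT_C N s : s <= 0 -> evalC s (killT N) = 0.
Proof.
  intros. unfold killT. rewrite evalC_pw. simpl. unfold Zt. rewrite evalC_pw. simpl.
  replace (Z.of_nat N * s + s - Z.of_nat N * s) with s by ring.
  replace (Z.min (s - Z.min s 0) 0) with 0 by lia. lia.
Qed.

Lemma killT_a N m v : 0 <= v < m -> m <= Z.of_nat N -> evalZ m v (killT N) = 0.
Proof.
  intros. unfold killT. rewrite evalZ_pw.
  - simpl. rewrite evalZ_Zt by lia. nia.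
  - simpl. rewrite evalZ_Zt by lia. lia.
Qed.

Definition wt := TMul (TImp TOne TV) TOne.
Definition w := evalE gbar wt.
Definition join (x y : elt) : elt := impA (impA x y) y.
Definition meet (x y : elt) : elt := mulA x (impA x y).

Lemma genB_evalE t f : genB f -> genB (evalE f t).
Proof. intros H; induction t; simpl; [auto|apply genB_one|apply genB_mul; auto|apply genB_imp; auto]. Qed.
Lemma genB_w : genB w.
Proof. unfold w. apply genB_evalE. apply genB_gen. Qed.
Lemma genB_join x y : genB x -> genB y -> genB (join x y).
Proof. intros; unfold join; apply genB_imp; auto; apply genB_imp; auto. Qed.
Lemma genB_meet x y : genB x -> genB y -> genB (meet x y).
Proof. intros; unfold meet; apply genB_mul; auto; apply genB_imp; auto. Qed.

Ltac zif :=
  repeat (match goal with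
  | |- context [if ?b then _ else _] =>
      lazymatch b with context [if _ then _ else _] => fail | _ =>
      let E := fresh "E" in destruct b eqn:E;
      rewrite ?orb_true_iff, ?andb_true_iff, ?orb_false_iff, ?andb_false_iff,
        ?Z.ltb_lt, ?Z.ltb_ge, ?Z.eqb_eq, ?Z.eqb_neq, ?Z.leb_le, ?Z.leb_gt in E
      end
  end; simpl in * ).

Lemma joinL_top k h x : impL k h (impL k h x (uL k h)) (uL k h) = uL k h.
Proof.
  destruct x as [x1 x2]. unfold impL, lmin, lexleb, padd, psub, uL; simpl.
  zif; try (f_equal; lia); lia.
Qed.

Lemma joinL_top2 k h y : impL k h (impL k h (uL k h) y) y = uL k h.
Proof.
  destruct y as [y1 y2]. unfold impL, lmin, lexleb, padd, psub, uL; simpl.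
  zif; try (f_equal; lia); lia.
Qed.

Lemma join_top t x y : (x t = cone t \/ y t = cone t) -> join x y t = cone t.
Proof.
  destruct t as [[k h] i]. unfold join, impA.
  destruct i as [|[|[|i]]]; simpl; intros [H|H]; rewrite H; simpl.
  - apply joinL_top2.
  - apply joinL_top.
  - apply joinL_top2.
  - apply joinL_top.
  - unfold impLn; f_equal; lia.
  - unfold impLn; f_equal; lia.
  - f_equal; lia.
  - f_equal; lia.
Qed.

Lemma join2 k h x y v : x (k,h,2%nat) = (v,0) -> y (k,h,2%nat) = (0,0) ->
  0 <= v <= Z.of_nat k -> join x y (k,h,2%nat) = (v,0).
Proof.
  intros Hx Hy Hv. unfold join, impA; simpl. rewrite Hx, Hy; simpl. unfold impLn. f_equal; lia.
Qed.

Lemma meet2 k h x y v v' : x (k,h,2%nat) = (v,0) -> y (k,h,2%nat) = (v',0) ->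
  0 <= v <= Z.of_nat k -> 0 <= v' <= Z.of_nat k -> meet x y (k,h,2%nat) = (Z.min v v',0).
Proof.
  intros Hx Hy Hv Hv'. unfold meet, impA, mulA; simpl. rewrite Hx, Hy; simpl.
  unfold impLn, mulLn. f_equal; lia.
Qed.

Lemma meet_top t x y : (1 <= fst (fst t))%nat -> x t = cone t -> y t = cone t ->
  meet x y t = cone t.
Proof.
  destruct t as [[k h] i]. simpl. intros Hk Hx Hy. unfold meet, impA, mulA.
  rewrite Hx, Hy. destruct i as [|[|[|i]]]; simpl.
  1,2: unfold mulL, impL, lmin, lmax, lexleb, padd, psub, uL; simpl; zif; try (f_equal; lia); lia.
  - unfold mulLn, impLn; f_equal; lia.
  - f_equal; lia.
Qed.

Lemma w2 k h : (h < k)%nat -> w (k,h,2%nat) = (Z.of_nat h, 0).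
Proof.
  intros. unfold w. rewrite eval2 by reflexivity. simpl. f_equal. lia.
Qed.

Lemma w3 : w (0%nat,0%nat,3%nat) = (-1, 0).
Proof. unfold w. rewrite (eval3 _ _ (-1)) by reflexivity. reflexivity. Qed.

Lemma wJ k h i : (i <= 1)%nat -> (1 <= k)%nat ->
  exists v r, w (k,h,i) = (v, r) /\ 0 <= v <= Z.of_nat k /\
     (v = Z.of_nat k -> r <= Z.of_nat h).
Proof.
  intros Hi Hk. unfold w, wt. simpl. unfold mulA, impA, oneA, cone.
  set (y := gbar (k,h,i)). clearbody y. destruct y as [y1 y2].
  destruct i as [|[|i]]; try lia; simpl;
  unfold mulL, impL, lmin, lmax, lexleb, padd, psub, uL; simpl;
  zif; eexists; eexists; (split; [reflexivity|]); split; try lia; intros; try lia.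
Qed.

Definition kl (M a h : nat) : list (nat*nat) :=
  filter (fun kp => negb (Nat.eqb (a * snd kp) (fst kp * h)))
    (flat_map (fun k => map (fun p => (k,p)) (seq 0 k)) (seq 1 M)).

Lemma in_kl M a h k p : In (k,p) (kl M a h) <->
  (1 <= k <= M)%nat /\ (p < k)%nat /\ (a*p <> k*h)%nat.
Proof.
  unfold kl. rewrite filter_In, in_flat_map. simpl. split.
  - intros [[k' [Hk' Hm]] Hb]. rewrite in_map_iff in Hm. destruct Hm as [p' [Heq Hp]].
    inversion Heq; subst. rewrite in_seq in Hk', Hp.
    rewrite negb_true_iff, Nat.eqb_neq in Hb. lia.
  - intros [H1 [H2 H3]]. split.
    + exists k. split. rewrite in_seq; lia. rewrite in_map_iff. exists p. split; auto.
      rewrite in_seq; lia.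
    + rewrite negb_true_iff, Nat.eqb_neq. auto.
Qed.

Definition E t := evalE w t.
Definition kill N a h (kp : nat*nat) := E (sharp N (fkp N a h (fst kp) (snd kp))).
Definition eh N M a h := fold_right join (E (killT N)) (map (kill N a h) (kl M a h)).
Definition AB (a h : nat) : Z*Z := epsilon (inhabits (0,0))
  (fun ab => 0 <= fst ab /\ fst ab * Z.of_nat h - snd ab * Z.of_nat a = Z.of_nat a - 1).
Definition uh N a h x :=
  E (pw (Lt N (Z.to_nat (fst (AB a h))) (snd (AB a h))) (Z.to_nat (Z.of_nat a - x))).
Definition Hl a := filter (fun h => Nat.eqb (Nat.gcd a h) 1) (seq 0 a).
Definition phi N M a x :=
  fold_right meet oneA (map (fun h => join (uh N a h x) (eh N M a h)) (Hl a)).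

Lemma in_Hl a h : In h (Hl a) <-> (h < a)%nat /\ Nat.gcd a h = 1%nat.
Proof.
  unfold Hl. rewrite filter_In, in_seq, Nat.eqb_eq. lia.
Qed.

Lemma AB_spec a h : (1 <= a)%nat -> Nat.gcd a h = 1%nat ->
  0 <= fst (AB a h) /\ fst (AB a h) * Z.of_nat h - snd (AB a h) * Z.of_nat a = Z.of_nat a - 1.
Proof.
  intros Ha Hg. unfold AB. apply epsilon_spec.
  destruct (Nat.gcd_bezout_pos a h) as [x [y Hxy]]; [lia|]. rewrite Hg in Hxy.
  exists (Z.of_nat y, Z.of_nat x - 1). simpl. split; [lia|].
  apply (f_equal Z.of_nat) in Hxy. rewrite Nat2Z.inj_add, !Nat2Z.inj_mul in Hxy. lia.
Qed.

Lemma genB_phi N M a x : genB (phi N M a x).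
Proof.
  unfold phi. induction (Hl a); simpl.
  - apply genB_one.
  - apply genB_meet; auto. apply genB_join.
    + unfold uh, E. apply genB_evalE, genB_w.
    + unfold eh. induction (kl M a a0); simpl.
      * apply genB_evalE, genB_w.
      * apply genB_join; auto. unfold kill, E. apply genB_evalE, genB_w.
Qed.

Lemma eh_top N M a h t :
  (E (killT N) t = cone t \/ exists kp, In kp (kl M a h) /\ kill N a h kp t = cone t) ->
  eh N M a h t = cone t.
Proof.
  unfold eh. induction (kl M a h); simpl; intros [H|[kp [Hin Hk]]]; auto.
  - contradiction.
  - apply join_top. right. apply IHl. auto.
  - destruct Hin as [<-|Hin].
    + apply join_top; auto.
    + apply join_top. right. apply IHl. right. eauto.
Qed.

Lemma E2 t k h : (h < k)%nat -> E t (k,h,2%nat) = (evalZ (Z.of_nat k) (Z.of_nat h) t, 0).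
Proof.
  intros. unfold E. rewrite eval2; rewrite w2; auto.
Qed.

Lemma eh_zero N M a h : (h < a)%nat -> (a <= N)%nat ->
  eh N M a h (a,h,2%nat) = (0,0).
Proof.
  intros Hh HN. unfold eh.
  assert (Hk : forall kp, In kp (kl M a h) -> kill N a h kp (a,h,2%nat) = (0,0)).
  { intros [k p] Hin. apply in_kl in Hin. unfold kill. rewrite E2 by auto. simpl.
    f_equal. apply evalZ_sharp0; try lia. apply fkp_at_a; lia. }
  induction (kl M a h); cbn [map fold_right].
  - rewrite E2 by auto. f_equal. apply killT_a; lia.
  - apply join2 with (v := 0); try lia.
    + apply Hk; simpl; auto.
    + apply IHl. intros; apply Hk; simpl; auto.
Qed.

Lemma gauss_div a h k p : Nat.gcd a h = 1%nat -> (a*p = k*h)%nat -> Nat.divide a k.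
Proof.
  intros Hg He. apply (Nat.gauss a h k); auto. exists p. lia.
Qed.

Lemma kill_top2 N a h k p : (p < k)%nat -> (k <= N)%nat -> (1 <= a)%nat ->
  (a * p <> k * h)%nat -> kill N a h (k,p) (k,p,2%nat) = cone (k,p,2%nat).
Proof.
  intros. unfold kill. rewrite E2 by auto. simpl. f_equal.
  apply evalZ_sharp1; try lia. apply fkp_at_k; lia.
Qed.

Lemma sharpJ k h i F Zv : (i <= 1)%nat -> (1 <= k)%nat ->
  fst (F (k,h,i)) = Z.of_nat k -> Zv (k,h,i) = (0,0) ->
  impA (impA F Zv) F (k,h,i) = uL k h.
Proof.
  intros Hi Hk HF HZ. destruct (F (k,h,i)) as [f1 f2] eqn:EF. simpl in HF. subst f1.
  unfold impA. destruct i as [|[|i]]; try lia; simpl; rewrite EF, HZ;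
  unfold impL, lmin, lexleb, padd, psub, uL; simpl; zif; try (f_equal; lia); lia.
Qed.

Lemma ZtJ M k h i p r : (i <= 1)%nat -> (1 <= k)%nat -> (k <= M)%nat -> (p < k)%nat ->
  w (k,h,i) = (Z.of_nat p, r) -> E (Zt (S M)) (k,h,i) = (0,0).
Proof.
  intros Hi Hk HM Hp Hw. unfold E, Zt. simpl pw. simpl evalE.
  assert (H0 : fst (evalE w (pw TV M) (k,h,i)) = 0).
  { rewrite fst_eval by lia. rewrite Hw. simpl fst. rewrite evalZ_pw by (simpl; lia). simpl. nia. }
  unfold mulA. destruct i as [|[|i]]; try lia; simpl; unfold mulL; rewrite Hw;
  rewrite lmax_lt; auto; unfold psub, padd, uL; simpl; lia.
Qed.

Lemma kill_topJ M a h k h' i p r : (i <= 1)%nat -> (1 <= k)%nat -> (k <= M)%nat -> (p < k)%nat ->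
  (1 <= a)%nat -> (a * p <> k * h)%nat ->
  w (k,h',i) = (Z.of_nat p, r) -> kill (S M) a h (k,p) (k,h',i) = cone (k,h',i).
Proof.
  intros. unfold kill, sharp. simpl fst; simpl snd.
  replace (cone (k,h',i)) with (uL k h') by (destruct i as [|[|i]]; try lia; reflexivity).
  unfold E. cbn [evalE]. apply sharpJ; auto.
  - rewrite fst_eval by lia. rewrite H5. simpl. apply fkp_at_k; lia.
  - eapply ZtJ; eauto.
Qed.

Lemma killT_J N k h i r : (i <= 1)%nat -> (1 <= k)%nat -> r <= Z.of_nat h ->
  w (k,h,i) = (Z.of_nat k, r) -> E (killT N) (k,h,i) = cone (k,h,i).
Proof.
  intros. unfold E. rewrite (evalJ _ _ _ _ _ r) by auto. rewrite killT_C by lia.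
  destruct i as [|[|i]]; try lia; unfold cone, uL; f_equal; lia.
Qed.

Lemma killT_3 N : E (killT N) (0%nat,0%nat,3%nat) = cone (0%nat,0%nat,3%nat).
Proof.
  unfold E. rewrite (eval3 _ _ (-1)) by apply w3. rewrite killT_C by lia. reflexivity.
Qed.

Lemma uh_val M a h x : (1 <= a)%nat -> (a <= M)%nat -> (h < a)%nat -> Nat.gcd a h = 1%nat ->
  0 <= x <= Z.of_nat a -> uh (S M) a h x (a,h,2%nat) = (x,0).
Proof.
  intros Ha HM Hh Hg Hx. unfold uh. rewrite E2 by auto. f_equal.
  destruct (AB_spec a h Ha Hg) as [HA HB].
  set (A := fst (AB a h)) in *. set (B := snd (AB a h)) in *.
  assert (Hc : evalZ (Z.of_nat a) (Z.of_nat h) (Lt (S M) (Z.to_nat A) B) = Z.of_nat a - 1).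
  { rewrite evalZ_Lt by lia. rewrite Z2Nat.id by lia. lia. }
  rewrite evalZ_pw; rewrite Hc; [|lia]. rewrite Z2Nat.id by lia. lia.
Qed.

Lemma piece_a M a h0 h x : (1 <= a)%nat -> (a <= M)%nat -> (h0 < a)%nat -> In h (Hl a) ->
  0 <= x <= Z.of_nat a ->
  join (uh (S M) a h x) (eh (S M) M a h) (a,h0,2%nat) =
  if Nat.eqb h h0 then (x,0) else (Z.of_nat a, 0).
Proof.
  intros Ha HM Hh0 Hin Hx. apply in_Hl in Hin. destruct Hin as [Hh Hg].
  destruct (Nat.eqb_spec h h0).
  - subst. apply join2; auto. apply uh_val; auto. apply eh_zero; lia.
  - change (Z.of_nat a, 0) with (cone (a,h0,2%nat)). apply join_top. right.
    apply eh_top. right. exists (a,h0). split.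
    + apply in_kl. split; [lia|]. split; [lia|]. intro He.
      apply Nat.mul_cancel_l in He; lia.
    + apply kill_top2; try lia. intro He. apply Nat.mul_cancel_l in He; lia.
Qed.

Lemma phi_a M a h0 x : (1 <= a)%nat -> (a <= M)%nat -> (h0 < a)%nat -> Nat.gcd a h0 = 1%nat ->
  0 <= x <= Z.of_nat a -> phi (S M) M a x (a,h0,2%nat) = (x,0).
Proof.
  intros Ha HM Hh0 Hg Hx.
  assert (Hin0 : In h0 (Hl a)) by (apply in_Hl; auto).
  assert (Hp : forall h, In h (Hl a) -> join (uh (S M) a h x) (eh (S M) M a h) (a,h0,2%nat) =
     if Nat.eqb h h0 then (x,0) else (Z.of_nat a, 0)) by (intros; apply piece_a; auto).
  unfold phi.
  assert (G : forall l, (forall h, In h l -> In h (Hl a)) ->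
    fold_right meet oneA (map (fun h => join (uh (S M) a h x) (eh (S M) M a h)) l) (a,h0,2%nat)
      = (x,0) \/
    (fold_right meet oneA (map (fun h => join (uh (S M) a h x) (eh (S M) M a h)) l) (a,h0,2%nat)
      = (Z.of_nat a,0) /\ ~ In h0 l)).
  { induction l as [|h l IH]; intros Hl'.
    - right. split; [reflexivity | auto].
    - cbn [map fold_right].
      assert (Hh : In h (Hl a)) by (apply Hl'; simpl; auto).
      destruct IH as [IH|[IH Hn]]; [intros; apply Hl'; simpl; auto| |].
      + left. rewrite (meet2 _ _ _ _ (if Nat.eqb h h0 then x else Z.of_nat a) x).
        * destruct (Nat.eqb h h0); f_equal; lia.
        * rewrite Hp by auto. destruct (Nat.eqb h h0); auto.
        * auto.
        * destruct (Nat.eqb h h0); lia.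
        * lia.
      + rewrite (meet2 _ _ _ _ (if Nat.eqb h h0 then x else Z.of_nat a) (Z.of_nat a)).
        * destruct (Nat.eqb_spec h h0).
          -- left. f_equal. lia.
          -- right. split. f_equal. lia. simpl. intros [?|?]; auto.
        * rewrite Hp by auto. destruct (Nat.eqb h h0); auto.
        * auto.
        * destruct (Nat.eqb h h0); lia.
        * lia. }
  destruct (G (Hl a)) as [R|[_ R]]; auto. contradiction.
Qed.

Lemma in_sum x l : In x l -> (x <= list_sum l)%nat.
Proof. induction l; simpl; intros H; [contradiction|]. destruct H; subst; [lia|]. apply IHl in H. lia. Qed.

Lemma eh_top_other I J K a h k h' i :
  reduced I J K -> In a I -> Delta I J K (k,h',i) -> ~ (i = 2%nat /\ k = a) ->
  In h (Hl a) -> eh (S (list_sum (I ++ J))) (list_sum (I ++ J)) a h (k,h',i) = cone (k,h',i).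
Proof.
  intros Hred HaI HD Hna Hh. destruct Hred as [HI [HJ [_ [_ [H5 H6]]]]].
  apply in_Hl in Hh. destruct Hh as [Hh Hg].
  assert (Ha : (1 <= a)%nat) by (apply HI in HaI; lia).
  set (M := list_sum (I ++ J)).
  assert (Hdown : forall X, (forall m, In m X -> In m (I ++ J)) -> (forall m, In m X -> (0 < m)%nat) ->
     downset X k -> (k <= M)%nat).
  { intros X HX HX0 [m [Hm Hd]]. apply Nat.divide_pos_le in Hd; [|apply HX0; auto].
    pose proof (in_sum m (I ++ J) (HX m Hm)). unfold M. lia. }
  simpl in HD. destruct HD as [[Hi [Hk [Hd Hgk]]] | [[Hi [Hk [Hd Hgk]]] | [HK [Hk0 [Hh0 Hi]]]]].
  - subst i. assert (HkM : (k <= M)%nat).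
    { apply (Hdown I); auto. intros; apply in_or_app; auto. }
    apply eh_top. right. exists (k,h').
    assert (Hne : (a * h' <> k * h)%nat).
    { intro He. apply Hna. split; auto.
      apply Nat.divide_antisym.
      - apply (gauss_div k h' a h); auto; lia.
      - apply (gauss_div a h k h'); auto. }
    split.
    + apply in_kl. split; [lia|]. split; auto.
    + apply kill_top2; auto; lia.
  - assert (HkM : (k <= M)%nat).
    { apply (Hdown J); auto. intros; apply in_or_app; auto. }
    assert (Hi1 : (i <= 1)%nat) by lia.
    destruct (wJ k h' i Hi1 ltac:(lia)) as [v [r [Hw [Hv Hr]]]].
    apply eh_top.
    destruct (Z.eq_dec v (Z.of_nat k)) as [Ev|Ev].
    + left. subst v. apply (killT_J _ _ _ _ r); auto; lia.
    + right. exists (k, Z.to_nat v).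
      assert (Hne : (a * Z.to_nat v <> k * h)%nat).
      { intro He. destruct Hd as [n [Hn Hkn]].
        apply (H5 a HaI n (or_intror Hn)).
        apply Nat.divide_trans with k; auto. apply (gauss_div a h k (Z.to_nat v)); auto. }
      split.
      * apply in_kl. split; [lia|]. split; [lia|]. auto.
      * apply (kill_topJ _ _ _ _ _ _ _ r); auto; try lia.
        rewrite Hw. f_equal. lia.
  - subst. apply eh_top. left. apply killT_3.
Qed.

Lemma phi_other I J K a x k h' i :
  reduced I J K -> In a I -> Delta I J K (k,h',i) -> ~ (i = 2%nat /\ k = a) ->
  phi (S (list_sum (I ++ J))) (list_sum (I ++ J)) a x (k,h',i) = cone (k,h',i).
Proof.
  intros Hred HaI HD Hna. unfold phi.
  assert (Hk : (1 <= k)%nat \/ (k = 0 /\ h' = 0 /\ i = 3)%nat).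
  { simpl in HD. lia. }
  assert (G : forall l, (forall h, In h l -> In h (Hl a)) ->
    fold_right meet oneA (map (fun h => join (uh (S (list_sum (I ++ J))) a h x)
       (eh (S (list_sum (I ++ J))) (list_sum (I ++ J)) a h)) l) (k,h',i) = cone (k,h',i)).
  { induction l as [|h l IH]; intros Hl'; cbn [map fold_right]; [reflexivity|].
    assert (Hp : join (uh (S (list_sum (I ++ J))) a h x)
       (eh (S (list_sum (I ++ J))) (list_sum (I ++ J)) a h) (k,h',i) = cone (k,h',i)).
    { apply join_top. right. apply (eh_top_other I J K); auto. apply Hl'; simpl; auto. }
    destruct Hk as [Hk|[-> [-> ->]]].
    - apply meet_top; auto. apply IH. intros; apply Hl'; simpl; auto.
    - specialize (IH ltac:(intros; apply Hl'; simpl; auto)).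
      match goal with |- meet ?X ?Y ?T = _ =>
        change (cmul T (X T) (cimp T (X T) (Y T)) = cone T) end.
      rewrite Hp, IH. reflexivity. }
  apply G; auto.
Qed.

Lemma cone_ops I J K t : Delta I J K t ->
  cmul t (cone t) (cone t) = cone t /\ cimp t (cone t) (cone t) = cone t.
Proof.
  destruct t as [[k h] i]. simpl. intros HD.
  assert (Hk : (1 <= k)%nat \/ (i >= 3)%nat) by lia.
  destruct i as [|[|[|i]]]; simpl.
  1,2: unfold mulL, impL, lmin, lmax, lexleb, padd, psub, uL; simpl; split; zif; try (f_equal; lia); lia.
  - unfold mulLn, impLn. split; f_equal; lia.
  - split; f_equal; lia.
Qed.

Theorem theorem3p10 (I J : list nat) (K : bool) (a : nat) :
  reduced I J K -> In a I -> embeds_in_B a I J K.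
Proof.
  intros Hred HaI.
  pose proof Hred as Hred'. destruct Hred' as [HI [HJ [_ [_ [H5 H6]]]]].
  assert (Ha : (1 <= a)%nat) by (apply HI in HaI; lia).
  set (M := list_sum (I ++ J)).
  assert (HaM : (a <= M)%nat) by (apply in_sum; apply in_or_app; auto).
  exists (phi (S M) M a).
  assert (Hcase : forall k h' i, Delta I J K (k,h',i) ->
     (i = 2%nat /\ k = a /\ (h' < a)%nat /\ Nat.gcd a h' = 1%nat) \/ ~ (i = 2%nat /\ k = a)).
  { intros k h' i HD. destruct (Nat.eq_dec i 2); destruct (Nat.eq_dec k a); try (right; lia).
    left. subst. simpl in HD. repeat split; auto; lia. }
  split; [|split; [|split; [|split]]].
  - intros; apply genB_phi.
  - intros x y Hx Hy [[k h'] i] HD. unfold memLn in *.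
    destruct (Hcase k h' i HD) as [[-> [-> [Hh Hg]]]|Hn].
    + unfold mulA. rewrite !phi_a; auto; try lia. unfold mulLn; lia.
    + unfold mulA. unfold M. rewrite !(phi_other I J K); auto. symmetry; apply (cone_ops I J K); auto.
  - intros x y Hx Hy [[k h'] i] HD. unfold memLn in *.
    destruct (Hcase k h' i HD) as [[-> [-> [Hh Hg]]]|Hn].
    + unfold impA. rewrite !phi_a; auto; try lia. unfold impLn; lia.
    + unfold impA. unfold M. rewrite !(phi_other I J K); auto. symmetry; apply (cone_ops I J K); auto.
  - intros [[k h'] i] HD.
    destruct (Hcase k h' i HD) as [[-> [-> [Hh Hg]]]|Hn].
    + rewrite phi_a; auto; lia.
    + unfold M. rewrite (phi_other I J K); auto.
  - intros x y Hx Hy Heq. unfold memLn in *.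
    set (h0 := if Nat.eqb a 1 then 0%nat else 1%nat).
    assert (Hh0 : (h0 < a)%nat /\ Nat.gcd a h0 = 1%nat).
    { unfold h0. destruct (Nat.eqb_spec a 1).
      - subst. split; [lia|reflexivity].
      - split; [lia|]. rewrite Nat.gcd_comm; reflexivity. }
    assert (HD : Delta I J K (a,h0,2%nat)).
    { simpl. left. split; auto. split; [apply Hh0|]. split; [|apply Hh0].
      exists a. split; auto. apply Nat.divide_refl. }
    specialize (Heq _ HD). rewrite !phi_a in Heq; try apply Hh0; auto; try lia.
    congruence.
Qed.
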